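(* Let $L$ be a Lie algebra over a field $K$ of characteristic $\neq 2$ such that $\mathrm{HomLie}(L)$ is closed with respect to the anticommutator $\varphi * \psi = \frac12(\varphi\circ\psi+\psi\circ\varphi)$, and regard $\mathrm{HomLie}(L)$ as a Jordan algebra with this product. Then: (i) $L$ is homomorphically mapped to the Lie algebra $\mathrm{Der}(\mathrm{HomLie}(L))$ of derivations of this Jordan algebra; (ii) the automorphism group $\mathrm{Aut}(L)$ is homomorphically mapped to the automorphism group $\mathrm{Aut}(\mathrm{HomLie}(L))$ of this Jordan algebra.
   Context: A Hom-Lie structure on a Lie algebra $L$ is a linear map $\varphi: L \to L$ satisfying $[[x,y],\varphi(z)] + [[z,x],\varphi(y)] + [[y,z],\varphi(x)] = 0$ for all $x,y,z \in L$. $\mathrm{HomLie}(L)$ is the vector space of all Hom-Lie structures on $L$. *)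

(* Defs.v *)
From HB Require Import structures.
From mathcomp Require Import all_boot all_algebra.
Set Implicit Arguments. Unset Strict Implicit. Unset Printing Implicit Defensive.
Import GRing.Theory.
Local Open Scope ring_scope.

Section Defs.
Variables (K : fieldType) (V : lmodType K).

Definition is_lin (f : V -> V) : Prop :=
  forall (a : K) (x y : V), f (a *: x + y) = a *: f x + f y.

Definition lie_bracket (br : V -> V -> V) : Prop :=
  [/\ forall z, is_lin (fun x => br x z),
      forall x, is_lin (br x),
      forall x, br x x = 0
    & forall x y z, br x (br y z) + br y (br z x) + br z (br x y) = 0].

Definition hom_lie (br : V -> V -> V) (phi : V -> V) : Prop :=
  is_lin phi /\
  forall x y z, br (br x y) (phi z) + br (br z x) (phi y) + br (br y z) (phi x) = 0.

Definition jprod (phi psi : V -> V) : V -> V :=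
  fun v => 2^-1 *: (phi (psi v) + psi (phi v)).

Definition homlie_jordan_closed (br : V -> V -> V) : Prop :=
  forall phi psi, hom_lie br phi -> hom_lie br psi -> hom_lie br (jprod phi psi).

(* d is a derivation of the Jordan algebra HomLie(L)
   (maps HomLie(L) to itself, linear, Leibniz rule for jprod);
   equality of maps is pointwise *)
Definition jordan_der (br : V -> V -> V) (d : (V -> V) -> (V -> V)) : Prop :=
  [/\ forall phi, hom_lie br phi -> hom_lie br (d phi),
      forall (a : K) phi psi, hom_lie br phi -> hom_lie br psi ->
        forall v, d (fun w => a *: phi w + psi w) v = a *: d phi v + d psi v
    & forall phi psi, hom_lie br phi -> hom_lie br psi ->
        forall v, d (jprod phi psi) v = jprod (d phi) psi v + jprod phi (d psi) v].

Definition jordan_aut (br : V -> V -> V) (g gi : (V -> V) -> (V -> V)) : Prop :=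
  [/\ forall phi, hom_lie br phi -> hom_lie br (g phi) /\ hom_lie br (gi phi),
      forall phi, hom_lie br phi -> forall v, gi (g phi) v = phi v,
      forall phi, hom_lie br phi -> forall v, g (gi phi) v = phi v,
      forall (a : K) phi psi, hom_lie br phi -> hom_lie br psi ->
        forall v, g (fun w => a *: phi w + psi w) v = a *: g phi v + g psi v
    & forall phi psi, hom_lie br phi -> hom_lie br psi ->
        forall v, g (jprod phi psi) v = jprod (g phi) (g psi) v].

Definition lie_aut (br : V -> V -> V) (sigma sigmai : V -> V) : Prop :=
  [/\ is_lin sigma, cancel sigma sigmai, cancel sigmai sigma
    & forall x y, sigma (br x y) = br (sigma x) (sigma y)].

(* the map L -> Der(HomLie(L)) : x |-> (phi |-> [ad x, phi]) *)
Definition ad_der (br : V -> V -> V) (x : V) : (V -> V) -> (V -> V) :=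
  fun phi v => br x (phi v) - phi (br x v).

Definition conj_aut (sigma sigmai : V -> V) : (V -> V) -> (V -> V) :=
  fun phi v => sigma (phi (sigmai v)).

End Defs.

(* Main.v *)
Require Import Defs.
From HB Require Import structures.
From mathcomp Require Import all_boot all_algebra.
Import GRing.Theory.
Local Open Scope ring_scope.
Set Implicit Arguments. Unset Strict Implicit.

Lemma l3_aux (V : zmodType) (A B pC pD e f : V) :
  A - B - (pC - pD) = (A - e - (f - pD)) - (B - f - (e - pC)).
Proof.
rewrite !opprB !addrA.
by rewrite (ACl ((2*5)*(4*7)*(1*8*3*6))%AC) /= !addNr !add0r.
Qed.

Lemma l2_aux (V : zmodType) (a b c d e f : V) :
  a + b - (d + c) = (a - e + (f - c)) + ((e - d) + (b - f)).
Proof.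
rewrite !opprD !addrA.
by rewrite [RHS](ACl ((2*5)*(3*8)*(1*7*6*4))%AC) /= addNr addrN !add0r.
Qed.

Lemma comb_aux (V : zmodType) (t1 t2 t3 t4 t5 t6 t7 t8 t9 s1 s2 s3 : V) :
  t1 + t2 + t3 + t4 + t5 + t6 + t7 + t8 + t9 = 0 ->
  t1 + t5 + s3 = 0 -> t2 + s2 + t7 = 0 -> s1 + t4 + t8 = 0 ->
  (t3 - s1) + (t6 - s2) + (t9 - s3) = 0.
Proof.
move=> hA h1 h2 h3.
have e3 : s3 = - (t1 + t5).
  by apply/eqP; rewrite -addr_eq0 addrC h1.
have e2 : s2 = - (t2 + t7).
  by apply/eqP; rewrite -addr_eq0 addrCA addrA h2.
have e1 : s1 = - (t4 + t8).
  by apply/eqP; rewrite -addr_eq0 addrA h3.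
rewrite e1 e2 e3 !opprK !addrA.
by rewrite [LHS](ACl (8*5*1*2*9*4*6*3*7)%AC).
Qed.

Lemma lin_sc (K : fieldType) (V : lmodType K) (a : K) (p q r s : V) :
  a *: p + q - (a *: r + s) = a *: (p - r) + (q - s).
Proof. by rewrite scalerBr opprD addrACA. Qed.

Section Props.
Variables (K : fieldType) (V : lmodType K).

Section Lin.
Variable f : V -> V.
Hypothesis hf : is_lin f.
Lemma linD x y : f (x + y) = f x + f y.
Proof. by have := hf 1 x y; rewrite !scale1r. Qed.
Lemma linZ a x : f (a *: x) = a *: f x.
Proof.
have h0 : f 0 = 0.
  have h := hf 1 0 0; rewrite !scale1r !addr0 in h.
  by apply: (@addrI _ (f 0)); rewrite addr0 -h.
by have := hf a x 0; rewrite !addr0 h0 addr0.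
Qed.
Lemma lin0 : f 0 = 0.
Proof. by have := linZ 0 0; rewrite !scale0r. Qed.
Lemma linN x : f (- x) = - f x.
Proof. by rewrite -scaleN1r linZ scaleN1r. Qed.
Lemma linB x y : f (x - y) = f x - f y.
Proof. by rewrite linD linN. Qed.
End Lin.

Variable br : V -> V -> V.
Hypothesis hbr : lie_bracket br.

Lemma brlin_l z : is_lin (fun x => br x z). Proof. by case: hbr. Qed.
Lemma brlin_r x : is_lin (br x). Proof. by case: hbr. Qed.
Lemma brDl x y z : br (x + y) z = br x z + br y z.
Proof. exact: (linD (brlin_l z)). Qed.

Lemma antisym x y : br x y = - br y x.
Proof.
case: hbr => _ _ halt _.
have := halt (x + y).
rewrite brDl (linD (brlin_r x)) (linD (brlin_r y)) !halt add0r addr0 => /eqP.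
by rewrite addr_eq0 => /eqP.
Qed.

Lemma jac' x y w : br (br x y) w = br x (br y w) - br y (br x w).
Proof.
case: hbr => _ _ _ hj.
have := hj x y w.
rewrite (antisym w x) (linN (brlin_r y)) => J.
rewrite (antisym (br x y) w).
by apply/eqP; rewrite eq_sym -addr_eq0 J.
Qed.

Lemma der u a b : br u (br a b) = br (br u a) b + br a (br u b).
Proof. by rewrite (jac' u a b) subrK. Qed.

Lemma derexp u a b c :
  br u (br (br a b) c) = br (br (br u a) b) c + br (br a (br u b)) c + br (br a b) (br u c).
Proof. by rewrite (der u (br a b) c) (der u a b) brDl. Qed.

Lemma ad_hom u phi : hom_lie br phi -> hom_lie br (ad_der br u phi).
Proof.
move=> [lphi hphi]; split.
  move=> a x y; rewrite /ad_der (lphi a x y) (linD (brlin_r u)) (linZ (brlin_r u)).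
  by rewrite ((brlin_r u) a x y) (linD lphi) (linZ lphi) lin_sc.
move=> x y z; rewrite /ad_der !(linB (brlin_r _)).
have hA := congr1 (br u) (hphi x y z).
rewrite !(linD (brlin_r u)) (lin0 (brlin_r u)) !derexp !addrA in hA.
exact: (comb_aux hA (hphi (br u x) y z) (hphi x (br u y) z) (hphi x y (br u z))).
Qed.

Lemma adder u : jordan_der br (ad_der br u).
Proof.
split.
- exact: ad_hom.
- move=> a phi psi _ _ v; rewrite /ad_der.
  by rewrite (linD (brlin_r u)) (linZ (brlin_r u)) lin_sc.
- move=> phi psi [lphi _] [lpsi _] v; rewrite /ad_der /jprod /=.
  rewrite (linZ (brlin_r u)) (linD (brlin_r u)) (linB lphi) (linB lpsi).
  rewrite -scalerBr -!scalerDr; congr (_ *: _); exact: l2_aux.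
Qed.

Lemma ad_linear (a : K) x y phi : hom_lie br phi -> forall v,
  ad_der br (a *: x + y) phi v = a *: ad_der br x phi v + ad_der br y phi v.
Proof.
move=> [lphi _] v; rewrite /ad_der ((brlin_l v) a x y) (linD lphi) (linZ lphi).
by rewrite ((brlin_l (phi v)) a x y) lin_sc.
Qed.

Lemma ad_bracket x y phi : hom_lie br phi -> forall v,
  ad_der br (br x y) phi v =
    ad_der br x (ad_der br y phi) v - ad_der br y (ad_der br x phi) v.
Proof.
move=> [lphi _] v; rewrite /ad_der !jac' (linB lphi).
by rewrite !(linB (brlin_r _)); apply: l3_aux.
Qed.

Section Aut.
Variables sigma sigmai : V -> V.
Hypothesis hs : lie_aut br sigma sigmai.

Lemma aut_inv : lie_aut br sigmai sigma.
Proof.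
case: hs => ls c1 c2 hm; split => //.
  move=> a x y.
  by rewrite -{1}(c2 x) -{1}(c2 y) -ls c1.
move=> x y.
by rewrite -{1}(c2 x) -{1}(c2 y) -hm c1.
Qed.
End Aut.

Lemma conj_hom sigma sigmai phi : lie_aut br sigma sigmai ->
  hom_lie br phi -> hom_lie br (conj_aut sigma sigmai phi).
Proof.
move=> hs [lphi hphi].
have [ls c1 c2 hm] := hs.
have [lsi _ _ _] := aut_inv hs.
split.
  by move=> a x y; rewrite /conj_aut lsi lphi ls.
move=> x y z.
have := congr1 sigma (hphi (sigmai x) (sigmai y) (sigmai z)).
by rewrite !(linD ls) (lin0 ls) !hm !c2.
Qed.

Lemma conj_jaut sigma sigmai : lie_aut br sigma sigmai ->
  jordan_aut br (conj_aut sigma sigmai) (conj_aut sigmai sigma).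
Proof.
move=> hs.
have hi := aut_inv hs.
have [ls c1 c2 hm] := hs.
split.
- by move=> phi hp; split; [exact: conj_hom | exact: conj_hom].
- by move=> phi _ v; rewrite /conj_aut !c1.
- by move=> phi _ v; rewrite /conj_aut !c2.
- by move=> a phi psi _ _ v; rewrite /conj_aut ls.
- by move=> phi psi _ _ v; rewrite /conj_aut /jprod (linZ ls) (linD ls) !c1.
Qed.

End Props.

Theorem proposition2p6 (K : fieldType) (V : lmodType K) (br : V -> V -> V) :
  (2%:R : K) != 0 ->
  lie_bracket br ->
  homlie_jordan_closed br ->
  (* (i) x |-> [ad x, -] is a Lie algebra homomorphism L -> Der(HomLie(L)) *)
  ((forall x, jordan_der br (ad_der br x)) /\
   (forall (a : K) x y phi, hom_lie br phi -> forall v,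
      ad_der br (a *: x + y) phi v = a *: ad_der br x phi v + ad_der br y phi v) /\
   (forall x y phi, hom_lie br phi -> forall v,
      ad_der br (br x y) phi v =
        ad_der br x (ad_der br y phi) v - ad_der br y (ad_der br x phi) v)) /\
  (* (ii) sigma |-> sigma o - o sigma^-1 is a group homomorphism
          Aut(L) -> Aut(HomLie(L)) *)
  ((forall sigma sigmai, lie_aut br sigma sigmai ->
      jordan_aut br (conj_aut sigma sigmai) (conj_aut sigmai sigma)) /\
   (forall sigma sigmai tau taui,
      lie_aut br sigma sigmai -> lie_aut br tau taui ->
      forall phi, hom_lie br phi -> forall v,
        conj_aut (sigma \o tau) (taui \o sigmai) phi v =
          conj_aut sigma sigmai (conj_aut tau taui phi) v)).
Proof.
move=> _ hbr _.
split; first split; [exact: adder | split; [exact: ad_linear | exact: ad_bracket]|].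
split; first exact: conj_jaut.
by [].
Qed.
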